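(* Let $2 \leq d \leq k$ be integers, let $\Sigma_k=\{\sigma_1,\ldots,\sigma_k\}$ and $\Sigma_d=\{\sigma_1,\ldots,\sigma_d\}$. Consider two users over the alphabet $\Sigma_k$, where user 1 has confusion graph $G_1=(\Sigma_k,\{ab \mid a\in\Sigma_k,\ b\in\Sigma_k\setminus\Sigma_d,\ a\neq b\})$ (the complete graph on $\Sigma_k$ minus a clique on $\Sigma_d$) and user 2 has the empty confusion graph $G_2=(\Sigma_k,\emptyset)$. Then for every $\alpha\in[0,1]$ the rate vector $(\alpha\log_2 d,\ (1-\alpha)\log_2 k)$ is optimal.
   Context: Setting: a sender broadcasts a word of length $n$ over a finite alphabet $\Sigma$ to $r$ users; user $i$ has a confusion graph $G_i$ on vertex set $\Sigma$, where $ab$ is an edge iff user $i$ cannot distinguish letters $a$ and $b$. Two words $x,y\in\Sigma^n$ are distinguishable by user $i$ if there is a coordinate $t$ with $x_t\neq y_t$ and $x_ty_t$ not an edge of $G_i$. A vector $(m_1,\ldots,m_r)$ of positive integers is feasible for length $n$ if there is a map $E:[m_1]\times\cdots\times[m_r]\to\Sigma^n$ such that for every $i$ and all tuples $a,a'$ with $a_i\neq a'_i$, the words $E(a)$ and $E(a')$ are distinguishable by user $i$ (so user $i$ can decode his message $a_i$). A rate vector $(R_1,\ldots,R_r)$ is feasible if there is a sequence of feasible vectors $(m_1^{(n)},\ldots,m_r^{(n)})$ for lengths $n\to\infty$ with $R_i=\lim_{n\to\infty}\frac{\log_2 m_i^{(n)}}{n}$ for all $i$. For two users, a rate vector is optimal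 if it is feasible and no user can increase his rate while the other user keeps the same rate (i.e. no feasible $(R_1',R_2)$ with $R_1'>R_1$ and no feasible $(R_1,R_2')$ with $R_2'>R_2$). *)

(* Defs.v *)
From Stdlib Require Import Reals.
From mathcomp Require Import all_boot.

Set Implicit Arguments.
Unset Strict Implicit.
Unset Printing Implicit Defensive.

(* Alphabet Sigma_k = 'I_k (letter sigma_{i+1} is the ordinal i).
   A confusion graph is a relation on the alphabet (ab edge iff G a b). *)

Definition word (k n : nat) := 'I_n -> 'I_k.

Definition distinguishable (k : nat) (G : rel 'I_k) (n : nat) (x y : word k n) : Prop :=
  exists t : 'I_n, x t <> y t /\ ~~ G (x t) (y t).

Definition feasible2 (k : nat) (G1 G2 : rel 'I_k) (n m1 m2 : nat) : Prop :=
  (0 < m1)%N /\ (0 < m2)%N /\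
  exists E : 'I_m1 -> 'I_m2 -> word k n,
    (forall (a1 a1' : 'I_m1) (a2 a2' : 'I_m2),
        a1 <> a1' -> distinguishable G1 (E a1 a2) (E a1' a2')) /\
    (forall (a1 a1' : 'I_m1) (a2 a2' : 'I_m2),
        a2 <> a2' -> distinguishable G2 (E a1 a2) (E a1' a2')).

Definition log2 (x : R) : R := Rdiv (ln x) (ln 2).

Definition rate_feasible2 (k : nat) (G1 G2 : rel 'I_k) (R1 R2 : R) : Prop :=
  exists m1 m2 : nat -> nat,
    (forall n, feasible2 G1 G2 n (m1 n) (m2 n)) /\
    Un_cv (fun n => Rdiv (log2 (INR (m1 n))) (INR n)) R1 /\
    Un_cv (fun n => Rdiv (log2 (INR (m2 n))) (INR n)) R2.

Definition rate_optimal2 (k : nat) (G1 G2 : rel 'I_k) (R1 R2 : R) : Prop :=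
  rate_feasible2 G1 G2 R1 R2 /\
  ~ (exists R1' : R, Rgt R1' R1 /\ rate_feasible2 G1 G2 R1' R2) /\
  ~ (exists R2' : R, Rgt R2' R2 /\ rate_feasible2 G1 G2 R1 R2').

(* G1 = complete graph on Sigma_k minus a clique on Sigma_d:
   ab is an edge iff a <> b and one of a, b lies outside Sigma_d
   (i.e. has index >= d). *)
Definition G_minus_clique (d k : nat) : rel 'I_k :=
  fun a b => (a != b) && ((d <= a)%N || (d <= b)%N).

Definition G_empty (k : nat) : rel 'I_k := fun _ _ => false.

Arguments G_minus_clique d k : clear implicits.
Arguments G_empty k : clear implicits.

(* Main.v *)
Require Import Defs.
From Stdlib Require Import Reals Lra Lia ZArith.
From mathcomp Require Import all_boot.
Set Implicit Arguments.
Unset Strict Implicit.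

Section Comb.
Variables (d k : nat).

Fixpoint compat (x z : seq nat) : bool :=
  match x, z with
  | [::], [::] => true
  | c :: x', e :: z' => ((d <= c) || (c == e)) && compat x' z'
  | _, _ => false
  end.

Fixpoint cube (n : nat) : seq (seq nat) :=
  if n is n'.+1 then flatten [seq [seq e :: z | z <- cube n'] | e <- iota 0 d]
  else [:: [::]].

Definition cov (S : seq (seq nat)) n := count (fun z => has (fun x => compat x z) S) (cube n).
Definition Nd (S : seq (seq nat)) := size (undup S).
Definition Tsub e (S : seq (seq nat)) :=
  [seq behead x | x <- S & (d <= head 0 x) || (head 0 x == e)].
Definition Ssub c (S : seq (seq nat)) := [seq behead x | x <- S & head 0 x == c].
Definition wf n (x : seq nat) := (size x == n) && all (fun c => c < k) x.

Lemma sumn_const (T : Type) (s : seq T) c : sumn [seq c | _ <- s] = size s * c.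
Proof. by elim: s => //= a l ->; rewrite mulSn. Qed.

Lemma size_cube n : size (cube n) = d ^ n.
Proof.
elim: n => [|n IH] //=. rewrite size_flatten /shape -map_comp.
rewrite (eq_map (g := fun _ => d ^ n)); last by move=> e /=; rewrite size_map IH.
by rewrite sumn_const size_iota expnS.
Qed.

Lemma has_Tsub n e z S : (forall x, x \in S -> size x = n.+1) ->
  has (fun x => compat x (e :: z)) S = has (fun x => compat x z) (Tsub e S).
Proof.
elim: S => [|x S IH] //= H.
rewrite IH; last by move=> y Hy; apply: H; rewrite inE Hy orbT.
move: (H x (mem_head _ _)); clear H IH; case: x => [|c x'] //= _.
rewrite /Tsub /=. by case: ((d <= c) || (c == e)).
Qed.

Lemma cov_split n S : (forall x, x \in S -> size x = n.+1) ->
  cov S n.+1 = \sum_(0 <= e < d) cov (Tsub e S) n.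
Proof.
move=> H. rewrite /cov /= count_flatten -map_comp sumnE big_map /index_iota subn0.
apply: eq_bigr => e _. rewrite /=. rewrite count_map. apply: eq_count => z /=.
exact: (has_Tsub e z H).
Qed.

Lemma sum_count_head s K :
  \sum_(0 <= c < K) count (fun x => head 0 x == c) s = count (fun x => head 0 x < K) s.
Proof.
elim: K => [|K IH]; first by rewrite big_nil; elim: s => //= x s <-.
rewrite big_nat_recr //= IH.
have := count_predUI (fun x : seq nat => head 0 x < K) (fun x => head 0 x == K) s.
rewrite (eq_count (a1 := predI _ _) (a2 := pred0)); last first.
  by move=> x /=; case: eqP => [->|]; rewrite ?ltnn ?andbF.
rewrite count_pred0 addn0 => <-. apply: eq_count => x /=.
by rewrite ltnS [RHS]leq_eqVlt orbC.
Qed.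

Lemma cons_head_behead (x : seq nat) : 0 < size x -> x = head 0 x :: behead x.
Proof. by case: x. Qed.

Lemma Nd_split n S : (forall x, x \in S -> wf n.+1 x) ->
  Nd S <= \sum_(0 <= c < k) Nd (Ssub c S).
Proof.
move=> H.
have Hall : forall x, x \in undup S -> head 0 x < k /\ 0 < size x.
  move=> x; rewrite mem_undup => /H /andP[/eqP Hs Ha].
  have sx : 0 < size x by rewrite Hs.
  split=> //. move: Ha; rewrite (cons_head_behead sx) /= => /andP[Hh _]; exact Hh.
have -> : Nd S = count (fun x => head 0 x < k) (undup S).
  rewrite /Nd -(count_predT (undup S)). apply: eq_in_count => x /Hall [-> _] //.
rewrite -sum_count_head. apply: leq_sum => c _.
rewrite -size_filter -(size_map behead). apply: uniq_leq_size.
  rewrite map_inj_in_uniq; first by apply: filter_uniq; apply: undup_uniq.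
  move=> x y; rewrite !mem_filter => /andP[/eqP hx Hx] /andP[/eqP hy Hy] E.
  have [_ sx] := Hall x Hx. have [_ sy] := Hall y Hy.
  by rewrite (cons_head_behead sx) (cons_head_behead sy) hx hy E.
move=> y /mapP[x]; rewrite mem_filter mem_undup => /andP[hx Hx] ->.
rewrite mem_undup /Ssub. apply: map_f. by rewrite mem_filter hx.
Qed.

Lemma Nd_mono c e S : (c == e) || (d <= c) -> Nd (Ssub c S) <= Nd (Tsub e S).
Proof.
move=> Hce. apply: uniq_leq_size; first exact: undup_uniq.
move=> y; rewrite !mem_undup => /mapP[x]; rewrite mem_filter => /andP[/eqP hx Hx] ->.
apply: map_f. rewrite mem_filter Hx andbT hx.
by case/orP: Hce => [/eqP ->|->]; rewrite ?eqxx ?orbT.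
Qed.

Lemma wf_Tsub n e S : (forall x, x \in S -> wf n.+1 x) ->
  forall y, y \in Tsub e S -> wf n y.
Proof.
move=> H y /mapP[x]; rewrite mem_filter => /andP[_ /H /andP[/eqP Hs Ha]] ->.
case: x Hs Ha => //= c x [Hs] /andP[_ Ha]. by rewrite /wf Hs eqxx Ha.
Qed.

End Comb.

Unset Implicit Arguments.
Open Scope R_scope.

Lemma ln_le_sub1 z : 0 < z -> ln z <= z - 1.
Proof. intros Hz. generalize (exp_ineq1_le (ln z)). rewrite exp_ln; lra. Qed.

Section Pw.
Variable b : R.
Hypothesis hb0 : 0 < b.
Hypothesis hb1 : b <= 1.

Definition pw (x : R) : R := match Rlt_dec 0 x with left _ => Rpower x b | right _ => 0 end.

Lemma pw_ge0 x : 0 <= pw x.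
Proof. unfold pw; destruct (Rlt_dec 0 x). - unfold Rpower; left; apply exp_pos. - right; reflexivity. Qed.

Lemma pw0 : pw 0 = 0.
Proof. unfold pw; destruct (Rlt_dec 0 0); lra. Qed.

Lemma pw1 : pw 1 = 1.
Proof. unfold pw; destruct (Rlt_dec 0 1). - unfold Rpower; rewrite ln_1 Rmult_0_r exp_0; reflexivity. - lra. Qed.

Lemma pw_le x y : 0 <= x -> x <= y -> pw x <= pw y.
Proof.
intros Hx Hxy. destruct (Req_dec x 0) as [->|Hx0].
- rewrite pw0; apply pw_ge0.
- unfold pw; destruct (Rlt_dec 0 x); destruct (Rlt_dec 0 y); try lra.
  apply Rle_Rpower_l; lra.
Qed.

Lemma pw_mul x y : 0 <= x -> 0 <= y -> pw (x * y) = pw x * pw y.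
Proof.
intros Hx Hy. destruct (Req_dec x 0) as [->|Hx0].
{ rewrite Rmult_0_l pw0; ring. }
destruct (Req_dec y 0) as [->|Hy0].
{ rewrite Rmult_0_r pw0; ring. }
unfold pw. destruct (Rlt_dec 0 x); destruct (Rlt_dec 0 y); destruct (Rlt_dec 0 (x*y)); try lra.
- symmetry; apply Rpower_mult_distr; lra.
- exfalso; apply n; apply Rmult_lt_0_compat; lra.
Qed.

Lemma pw_tangent y : 0 <= y -> pw y <= 1 + b * (y - 1).
Proof.
intros Hy. destruct (Req_dec y 0) as [->|Hy0].
{ rewrite pw0; lra. }
assert (Hy' : 0 < y) by lra.
set (c := 1 + b * (y - 1)).
assert (Hc : 0 < c) by (unfold c; nra).
unfold pw; destruct (Rlt_dec 0 y); try lra.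
assert (H1 := ln_le_sub1 (y / c) ltac:(apply Rdiv_lt_0_compat; lra)).
assert (H2 := ln_le_sub1 (/ c) ltac:(apply Rinv_0_lt_compat; lra)).
unfold Rdiv in H1. rewrite ln_mult in H1; [|lra|apply Rinv_0_lt_compat; lra].
rewrite ln_Rinv in H1, H2; try lra.
assert (Hs : b * (y * / c - 1) + (1 - b) * (/ c - 1) = 0).
{ unfold c in *. field. lra. }
assert (Hl : b * ln y <= ln c) by nra.
unfold Rpower. rewrite <- (exp_ln c) by lra.
destruct (Rle_lt_or_eq_dec _ _ Hl) as [Hlt|Heq].
- left; apply exp_increasing; lra.
- rewrite Heq; lra.
Qed.

Lemma pw_concave l x y : 0 <= l <= 1 -> 0 <= x -> 0 <= y ->
  l * pw x + (1 - l) * pw y <= pw (l * x + (1 - l) * y).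
Proof.
intros Hl Hx Hy. set (c := l * x + (1 - l) * y).
assert (Hc0 : 0 <= c) by (unfold c; nra).
destruct (Req_dec c 0) as [Hc|Hc].
- rewrite Hc pw0.
  assert (l * x = 0) by (unfold c in Hc; nra).
  assert ((1 - l) * y = 0) by (unfold c in Hc; nra).
  assert (A1 : l * pw x = 0).
  { destruct (Rmult_integral _ _ H) as [E| E]; rewrite E; [ring| rewrite pw0; ring]. }
  assert (A2 : (1 - l) * pw y = 0).
  { destruct (Rmult_integral _ _ H0) as [E| E]; rewrite E; [ring| rewrite pw0; ring]. }
  lra.
- assert (Hcp : 0 < c) by lra.
  assert (Hic : 0 <= / c) by (left; apply Rinv_0_lt_compat; lra).
  assert (Px : pw x = pw (x / c) * pw c).
  { rewrite <- pw_mul; [f_equal; field; lra | apply Rmult_le_pos; lra | lra]. }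
  assert (Py : pw y = pw (y / c) * pw c).
  { rewrite <- pw_mul; [f_equal; field; lra | apply Rmult_le_pos; lra | lra]. }
  rewrite Px Py.
  assert (T1 := pw_tangent (x / c) ltac:(apply Rmult_le_pos; lra)).
  assert (T2 := pw_tangent (y / c) ltac:(apply Rmult_le_pos; lra)).
  assert (Hpc := pw_ge0 c).
  assert (S : l * (1 + b * (x / c - 1)) + (1 - l) * (1 + b * (y / c - 1)) = 1).
  { replace (l * (1 + b * (x / c - 1)) + (1 - l) * (1 + b * (y / c - 1))) with
      (1 + b * ((l * x + (1 - l) * y) / c - 1)) by (field; lra).
    fold c. field_simplify; lra. }
  assert (l * pw (x / c) + (1 - l) * pw (y / c) <= 1) by nra.
  nra.
Qed.

Lemma pw_homog K D M T : 1 < K -> pw K = D -> 0 <= M -> K * M <= T ->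
  (K - 1) * M * pw T <= pw M * ((D - 1) * T + (K - D) * M).
Proof.
intros HK HD HM HT. destruct (Req_dec M 0) as [->|HM0].
{ rewrite pw0. lra. }
assert (HMp : 0 < M) by lra.
assert (HTM : 0 < T - M) by nra.
set (l := (T - K * M) / (T - M)).
assert (Hl0 : 0 <= l) by (unfold l; apply Rmult_le_pos; [lra| left; apply Rinv_0_lt_compat; lra]).
assert (Hl1 : l <= 1).
{ unfold l. apply (Rmult_le_reg_r (T - M)); [lra|]. field_simplify; nra. }
assert (C := pw_concave l M T ltac:(lra) HM ltac:(lra)).
replace (l * M + (1 - l) * T) with (K * M) in C by (unfold l; field; lra).
rewrite pw_mul in C; try lra.
rewrite HD in C.
assert (Hpt := pw_ge0 T). assert (Hpm := pw_ge0 M).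
assert (E : (l * pw M + (1 - l) * pw T) * (T - M) = (T - K * M) * pw M + (K - 1) * M * pw T).
{ unfold l; field; lra. }
assert ((l * pw M + (1 - l) * pw T) * (T - M) <= D * pw M * (T - M)).
{ apply Rmult_le_compat_r; lra. }
nra.
Qed.

Fixpoint rsum (f : nat -> R) (n : nat) : R :=
  match n with O => 0 | S n => rsum f n + f n end.

Lemma rsum_le f g n : (forall e, (e < n)%coq_nat -> f e <= g e) -> rsum f n <= rsum g n.
Proof.
induction n as [|n IH]; intros H; cbn [rsum]; [lra|].
assert (rsum f n <= rsum g n) by (apply IH; intros; apply H; lia).
assert (f n <= g n) by (apply H; lia). lra.
Qed.

Lemma rsum_ext f g n : (forall e, f e = g e) -> rsum f n = rsum g n.
Proof. intros H; induction n as [|n IH]; cbn [rsum]; [reflexivity| rewrite IH H; reflexivity]. Qed.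

Lemma rsum_lin A s g n : rsum (fun e => A + s * g e) n = INR n * A + s * rsum g n.
Proof. induction n as [|n IH]; cbn [rsum]; [cbn [INR]; ring|]. rewrite IH S_INR. ring. Qed.

Lemma rsum_ge0 g n : (forall e, (e < n)%coq_nat -> 0 <= g e) -> 0 <= rsum g n.
Proof.
induction n as [|n IH]; intros H; cbn [rsum]; [lra|].
assert (0 <= rsum g n) by (apply IH; intros; apply H; lia).
assert (0 <= g n) by (apply H; lia). lra.
Qed.

Lemma rsum_term g n e : (forall e, (e < n)%coq_nat -> 0 <= g e) -> (e < n)%coq_nat -> g e <= rsum g n.
Proof.
induction n as [|n IH]; intros H He; cbn [rsum]; [lia|].
destruct (Nat.eq_dec e n) as [->|Hne].
- assert (0 <= rsum g n) by (apply rsum_ge0; intros; apply H; lia). lra.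
- assert (g e <= rsum g n) by (apply IH; [intros; apply H; lia| lia]).
  assert (0 <= g n) by (apply H; lia). lra.
Qed.

Lemma key_ineq K d M u : 1 < K -> pw K = INR d -> INR d <= K -> 0 <= M ->
  (forall e, (e < d)%coq_nat -> M <= u e) ->
  pw (rsum u d + (K - INR d) * M) <= rsum (fun e => pw (u e)) d.
Proof.
intros HK HD HdK HM Hu.
set (T := rsum u d + (K - INR d) * M).
assert (HS : INR d * M <= rsum u d).
{ rewrite <- (Rplus_0_r (INR d * M)), <- (Rmult_0_r 0).
  replace (INR d * M + 0 * 0) with (INR d * M + 0 * rsum u d) by ring.
  rewrite <- rsum_lin. apply rsum_le. intros e He. specialize (Hu e He). lra. }
assert (HKM : K * M <= T) by (unfold T; nra).
assert (Hsum0 : 0 <= rsum (fun e => pw (u e)) d) by (apply rsum_ge0; intros; apply pw_ge0).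
destruct (Req_dec T M) as [HTM|HTM].
{ assert (M = 0) by nra. rewrite HTM H pw0. lra. }
assert (HTM' : 0 < T - M) by nra.
set (s := (pw T - pw M) / (T - M)).
assert (Hch : forall e, (e < d)%coq_nat -> pw M + s * (u e - M) <= pw (u e)).
{ intros e He.
  assert (HuT : u e <= T).
  { assert (u e <= rsum u d) by (apply rsum_term; auto; intros e' He'; specialize (Hu e' He'); lra).
    unfold T; nra. }
  specialize (Hu e He).
  set (l := (T - u e) / (T - M)).
  assert (Hl0 : 0 <= l) by (unfold l; apply Rmult_le_pos; [lra| left; apply Rinv_0_lt_compat; lra]).
  assert (Hl1 : l <= 1).
  { unfold l. apply (Rmult_le_reg_r (T - M)); [lra|]. field_simplify; lra. }
  assert (C := pw_concave l M T ltac:(lra) HM ltac:(lra)).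
  replace (l * M + (1 - l) * T) with (u e) in C by (unfold l; field; lra).
  replace (pw M + s * (u e - M)) with (l * pw M + (1 - l) * pw T); [lra|].
  unfold l, s; field; lra. }
assert (H1 : rsum (fun e => pw M + s * (u e - M)) d <= rsum (fun e => pw (u e)) d)
  by (apply rsum_le; exact Hch).
assert (E1 : rsum (fun e => pw M + s * (u e - M)) d = INR d * pw M + s * (rsum u d - INR d * M)).
{ replace (rsum (fun e => pw M + s * (u e - M)) d) with
     (rsum (fun e => (pw M - s * M) + s * u e) d).
  - rewrite rsum_lin. ring.
  - apply rsum_ext; intros; ring. }
assert (Hh := pw_homog K (INR d) M T HK HD HM HKM).
assert (E2 : INR d * pw M + s * (rsum u d - INR d * M) =
   pw T + (pw M * ((INR d - 1) * T + (K - INR d) * M) - (K - 1) * M * pw T) / (T - M)).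
{ unfold s. replace (rsum u d) with (T - (K - INR d) * M) by (unfold T; ring). field; lra. }
assert (0 <= (pw M * ((INR d - 1) * T + (K - INR d) * M) - (K - 1) * M * pw T) / (T - M)).
{ apply Rmult_le_pos; [lra| left; apply Rinv_0_lt_compat; lra]. }
lra.
Qed.
End Pw.

Lemma INR_addn m n : INR (m + n)%N = INR m + INR n.
Proof. apply plus_INR. Qed.
Lemma INR_muln m n : INR (m * n)%N = INR m * INR n.
Proof. apply mult_INR. Qed.
Lemma INR_leq m n : (m <= n)%N -> INR m <= INR n.
Proof. move=> /leP; apply le_INR. Qed.

Lemma INR_sum g m : INR (\sum_(0 <= e < m) g e)%N = rsum (fun e => INR (g e)) m.
Proof.
elim: m => [|m IH]; first by rewrite big_nil.
by rewrite big_nat_recr //= INR_addn IH.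
Qed.

Lemma main_bound d k b n S : (2 <= d)%N -> (d <= k)%N -> 0 < b -> b <= 1 ->
  pw b (INR k) = INR d -> (forall x, x \in S -> wf k n x) ->
  pw b (INR (Nd S)) <= INR (cov d S n).
Proof.
move=> hd hdk hb0 hb1 hK. elim: n S => [|n IH] S HS.
- case: S HS => [|x S] HS.
  + rewrite /Nd /cov /=. rewrite pw0. lra.
  + have Hx : x = [::].
      by move: (HS x (mem_head _ _)) => /andP[/eqP /size0nil ->].
    have -> : cov d (x :: S) 0 = 1%N by rewrite /cov /= Hx.
    have HN : (Nd (x :: S) <= 1)%N.
      have -> : 1%N = size [:: ([::] : seq nat)] by [].
      apply: uniq_leq_size; first exact: undup_uniq.
      move=> y; rewrite mem_undup => /HS /andP[/eqP Hy _].
      by move: Hy; case: y.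
    eapply Rle_trans; [exact (pw_le b hb0 _ _ (pos_INR _) (INR_leq _ _ HN))|].
    change (INR 1) with 1. rewrite pw1. lra.
- set s := fun c => Nd (Ssub c S).
  set M := \max_(c <- index_iota d k) s c.
  set u := fun e => Nd (Tsub d e S).
  have H1 := Nd_split HS.
  have H2 : (\sum_(0 <= c < k) s c = \sum_(0 <= c < d) s c + \sum_(d <= c < k) s c)%N.
    by rewrite -big_cat_nat.
  have H3 : (\sum_(0 <= c < d) s c <= \sum_(0 <= e < d) u e)%N.
    apply: leq_sum => c _. by apply: Nd_mono; rewrite eqxx.
  have H4 : (\sum_(d <= c < k) s c <= (k - d) * M)%N.
    rewrite -sum_nat_const_nat big_seq [X in (_ <= X)%N]big_seq.
    apply: leq_sum => c Hc. rewrite /M. exact: (leq_bigmax_seq c Hc).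
  have H5 : forall e, (e < d)%coq_nat -> INR M <= INR (u e).
    move=> e _. apply: INR_leq. apply/bigmax_leqP_seq => c Hc _.
    apply: Nd_mono. rewrite mem_index_iota in Hc. by case/andP: Hc => ->; rewrite orbT.
  have HN : (Nd S <= \sum_(0 <= e < d) u e + (k - d) * M)%N.
    apply: (leq_trans H1). rewrite H2. exact: leq_add.
  have HNR : INR (Nd S) <= rsum (fun e => INR (u e)) d + (INR k - INR d) * INR M.
    eapply Rle_trans; [exact (INR_leq _ _ HN)|].
    rewrite INR_addn INR_sum INR_muln.
    have -> : INR k = INR (k - d)%N + INR d by rewrite -INR_addn subnK.
    lra.
  have Hk1 : 1 < INR k.
    have : (2 <= k)%N by apply: leq_trans hdk.
    move=> /INR_leq. rewrite /= => H. lra.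
  eapply Rle_trans; [exact (pw_le b hb0 _ _ (pos_INR _) HNR)|].
  eapply Rle_trans; [exact (key_ineq b hb0 hb1 (INR k) d (INR M) (fun e => INR (u e)) Hk1 hK
                     (INR_leq _ _ hdk) (pos_INR _) H5)|].
  rewrite (@cov_split d n S); last by move=> x /HS /andP[/eqP ->].
  rewrite INR_sum. apply: rsum_le => e _. apply: IH. exact: wf_Tsub.
Qed.

Lemma compat_nth d x z i : compat d x z -> (i < size x)%N -> (nth 0%N x i < d)%N ->
  nth 0%N z i = nth 0%N x i.
Proof.
elim: x z i => [|c x IH] [|e z] i //=.
case/andP=> Hce Hc. case: i => [|i] /=.
- move=> _ Hcd. move: Hce; rewrite leqNgt Hcd /= => /eqP ->. by [].
- rewrite ltnS => Hi Hn. exact: IH.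
Qed.

Definition wordof k n (w : word k n) : seq nat := [seq val (w t) | t <- enum 'I_n].
Arguments wordof {k n} w.

Lemma nth_wordof k n (w : word k n) (t : 'I_n) : nth 0%N (wordof w) t = val (w t).
Proof.
rewrite /wordof (nth_map t); last by rewrite size_enum_ord.
by rewrite nth_ord_enum.
Qed.

Lemma size_wordof k n (w : word k n) : size (wordof w) = n.
Proof. by rewrite size_map size_enum_ord. Qed.

Lemma wf_wordof k n (w : word k n) : wf k n (wordof w).
Proof.
rewrite /wf size_wordof eqxx /=. apply/allP => c /mapP[t _ ->]. exact: ltn_ord.
Qed.

Lemma sum_excl (T : finType) (P : T -> seq nat -> bool) (L : seq (seq nat)) :
  (forall z a a', a != a' -> P a z -> P a' z -> False) ->
  (\sum_(a : T) count (P a) L <= size L)%N.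
Proof.
move=> H. elim: L => [|z L IH] /=; first by rewrite big1.
rewrite big_split /= addnC -addn1 leq_add //.
case: (pickP (fun a => P a z)) => [a0 Ha0|Hn].
- rewrite (bigD1 a0) //= Ha0 big1 // => a Ha.
  case Hz: (P a z) => //. exfalso; exact: (H z a a0 Ha Hz Ha0).
- by rewrite big1 // => a _; rewrite Hn.
Qed.

Lemma sum_lb m (g : 'I_m -> nat) c : (forall a, c <= INR (g a)) ->
  INR m * c <= INR (\sum_(a < m) g a)%N.
Proof.
elim: m g => [|m IH] g H.
- rewrite big_ord0; cbn [INR]; lra.
- have E : (\sum_(a < m.+1) g a = \sum_(a < m) g (widen_ord (leqnSn m) a) + g ord_max)%N.
    by rewrite big_ord_recr.
  rewrite E INR_addn S_INR.
  have := IH (fun a => g (widen_ord (leqnSn m) a)) (fun a => H _).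
  have := H ord_max. lra.
Qed.

Lemma natpowE d n : Nat.pow d n = (d ^ n)%N.
Proof. by elim: n => //= n ->; rewrite expnS. Qed.

Lemma upper d k b n m1 m2 : (2 <= d)%N -> (d <= k)%N -> 0 < b -> b <= 1 ->
  pw b (INR k) = INR d ->
  feasible2 (G_minus_clique d k) (G_empty k) n m1 m2 ->
  INR m1 * pw b (INR m2) <= INR d ^ n.
Proof.
move=> hd hdk hb0 hb1 hK [hm1 [hm2 [E [HE1 HE2]]]].
set S := fun a : 'I_m1 => [seq wordof (E a a2) | a2 <- enum 'I_m2].
have HNd : forall a, Nd (S a) = m2.
  move=> a. rewrite /Nd undup_id; first by rewrite size_map size_enum_ord.
  rewrite map_inj_uniq ?enum_uniq // => a2 a2' Heq.
  apply/eqP; apply/negPn/negP => Hne.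
  have [t [Ht _]] := HE2 a a a2 a2' (elimN eqP Hne).
  apply: Ht. apply: val_inj. by rewrite -!nth_wordof Heq.
have Hcov : forall a, pw b (INR m2) <= INR (cov d (S a) n).
  move=> a. rewrite -(HNd a). apply: (main_bound d k b n (S a) hd hdk hb0 hb1 hK).
  move=> x /mapP[a2 _ ->]. exact: wf_wordof.
have Hsum : (\sum_(a : 'I_m1) cov d (S a) n <= d ^ n)%N.
  rewrite -(size_cube d n). apply: sum_excl => z a a' Hne.
  move=> /hasP[x /mapP[a2 _ ->] Hx] /hasP[y /mapP[a2' _ ->] Hy].
  have [t [Ht HG]] := HE1 a a' a2 a2' (elimN eqP Hne).
  move: HG; rewrite /G_minus_clique negb_and.
  have -> /= : (E a a2 t != E a' a2' t) = true by apply/eqP.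
  rewrite negb_or -!ltnNge => /andP[H1 H2].
  apply: Ht. apply: val_inj.
  have := compat_nth d _ _ t Hx. rewrite size_wordof nth_wordof => /(_ (ltn_ord t) H1) <-.
  have := compat_nth d _ _ t Hy. rewrite size_wordof nth_wordof => /(_ (ltn_ord t) H2) <-.
  by [].
have := sum_lb m1 (fun a => cov d (S a) n) _ Hcov.
move=> H1. eapply Rle_trans; [exact H1|]. rewrite -pow_INR. apply INR_leq. rewrite natpowE. exact Hsum.
Qed.

Lemma cv_const c : Un_cv (fun _ => c) c.
Proof. intros eps He. exists 0%nat. intros n _. unfold Rdist. rewrite Rminus_diag Rabs_R0. lra. Qed.

Lemma cv_ext1 u v l : (forall n, (1 <= n)%coq_nat -> u n = v n) -> Un_cv v l -> Un_cv u l.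
Proof.
intros H Hv eps He. destruct (Hv eps He) as [N HN]. exists (S N). intros n Hn.
rewrite H; [apply HN|]; lia.
Qed.

Lemma ln_le_mono x y : 0 < x -> x <= y -> ln x <= ln y.
Proof.
intros Hx Hxy. destruct (Rle_lt_or_eq_dec _ _ Hxy) as [H|H].
- left; apply ln_increasing; lra.
- rewrite H; lra.
Qed.

Lemma INR_pos m : (0 < m)%N -> 0 < INR m.
Proof. move=> H. apply lt_0_INR. by apply/ltP. Qed.

Section Rates.
Variables (d k : nat).
Hypothesis hd : (2 <= d)%N.
Hypothesis hdk : (d <= k)%N.

Let Dr := INR d.
Let Kr := INR k.

Lemma Dr_gt1 : 1 < Dr.
Proof. unfold Dr. have := INR_leq _ _ hd. cbn [INR]. lra. Qed.
Lemma Kr_ge : Dr <= Kr.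
Proof. exact: INR_leq. Qed.
Lemma lnD_pos : 0 < ln Dr.
Proof. rewrite <- ln_1. apply ln_increasing; [lra| exact Dr_gt1]. Qed.
Lemma lnK_ge : ln Dr <= ln Kr.
Proof. apply ln_le_mono; [have := Dr_gt1; lra| exact Kr_ge]. Qed.

Definition bb := ln Dr / ln Kr.

Lemma bb_pos : 0 < bb.
Proof. have := lnD_pos; have := lnK_ge => *. unfold bb. apply Rdiv_lt_0_compat; lra. Qed.
Lemma bb_le1 : bb <= 1.
Proof.
have := lnD_pos; have := lnK_ge => *. unfold bb.
apply (Rmult_le_reg_r (ln Kr)); [lra|]. field_simplify; lra.
Qed.
Lemma pw_K : pw bb Kr = Dr.
Proof.
have := lnD_pos; have := lnK_ge => *.
unfold pw. destruct (Rlt_dec 0 Kr) as [H|H]; [| have := Kr_ge; have := Dr_gt1; lra].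
unfold Rpower, bb. replace (ln Dr / ln Kr * ln Kr) with (ln Dr) by (field; lra).
apply exp_ln. have := Dr_gt1; lra.
Qed.

Lemma log_bound n m1 m2 :
  feasible2 (G_minus_clique d k) (G_empty k) n m1 m2 ->
  ln (INR m1) / ln Dr + ln (INR m2) / ln Kr <= INR n.
Proof.
move=> Hf. have Hup := upper d k bb n m1 m2 hd hdk bb_pos bb_le1 pw_K Hf.
case: Hf => [hm1 [hm2 _]].
have P1 := INR_pos _ hm1. have P2 := INR_pos _ hm2.
have LD := lnD_pos. have LK := lnK_ge.
have Hpw : pw bb (INR m2) = Rpower (INR m2) bb.
  unfold pw. destruct (Rlt_dec 0 (INR m2)); [reflexivity| lra].
rewrite Hpw in Hup.
have Hpos : 0 < INR m1 * Rpower (INR m2) bb.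
  apply Rmult_lt_0_compat; [lra| unfold Rpower; apply exp_pos].
have := ln_le_mono _ _ Hpos Hup.
rewrite ln_mult; [|lra| unfold Rpower; apply exp_pos].
rewrite ln_Rpower ln_pow; [|apply lt_0_INR; apply/ltP; exact: leq_trans hd].
fold Dr. unfold bb. move=> H.
apply (Rmult_le_reg_r (ln Dr)); [lra|].
replace ((ln (INR m1) / ln Dr + ln (INR m2) / ln Kr) * ln Dr) with
  (ln (INR m1) + ln Dr / ln Kr * ln (INR m2)) by (field; lra).
exact H.
Qed.

Lemma rate_bound R1 R2 :
  rate_feasible2 (G_minus_clique d k) (G_empty k) R1 R2 ->
  R1 / log2 Dr + R2 / log2 Kr <= 1.
Proof.
move=> [m1 [m2 [Hf [H1 H2]]]].
have LD := lnD_pos. have LK := lnK_ge. have L2 : 0 < ln 2 by (have := ln_lt_2; lra).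
have LDr : 0 < log2 Dr by (unfold log2; apply Rdiv_lt_0_compat; lra).
have LKr : 0 < log2 Kr by (unfold log2; apply Rdiv_lt_0_compat; lra).
set w := fun n => (log2 (INR (m1 n)) / INR n) * / log2 Dr + (log2 (INR (m2 n)) / INR n) * / log2 Kr.
have Hw : Un_cv w (R1 * / log2 Dr + R2 * / log2 Kr).
  apply CV_plus; apply CV_mult; try assumption; apply cv_const.
apply Rnot_lt_le => Hlt.
have He : R1 * / log2 Dr + R2 * / log2 Kr - 1 > 0 by (unfold Rdiv in Hlt; lra).
destruct (Hw _ He) as [N HN].
have := HN (S N) ltac:(lia). unfold Rdist.
have Hb := log_bound (S N) (m1 (S N)) (m2 (S N)) (Hf (S N)).
have Hn : 0 < INR (S N) by apply lt_0_INR; lia.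
have Ew : w (S N) = (ln (INR (m1 (S N))) / ln Dr + ln (INR (m2 (S N))) / ln Kr) / INR (S N).
  unfold w, log2. field. unfold log2 in *. repeat split; try lra; intro Z; rewrite Z in LDr LKr; unfold Rdiv in *; lra.
rewrite Ew => Habs.
set X := ln (INR (m1 (S N))) / ln Dr + ln (INR (m2 (S N))) / ln Kr.
have : X / INR (S N) <= 1.
  apply (Rmult_le_reg_r (INR (S N))); [lra|].
  replace (X / INR (S N) * INR (S N)) with X by (field; lra). rewrite /X; lra.
move=> HX. move: Habs => /Rabs_def2 [A B]. rewrite /X in HX. lra.
Qed.

End Rates.

Definition dig B x i := ((x %/ B ^ i) %% B)%N.

Lemma dig_lt B x i : (0 < B)%N -> (dig B x i < B)%N.
Proof. move=> H; exact: ltn_pmod. Qed.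

Lemma dig_inj B a : (0 < B)%N -> forall x y, (x < B ^ a)%N -> (y < B ^ a)%N ->
  (forall t, (t < a)%N -> dig B x t = dig B y t) -> x = y.
Proof.
move=> HB. elim: a => [|a IH] x y Hx Hy H.
- move: Hx Hy; rewrite expn0 !ltnS !leqn0 => /eqP -> /eqP ->. by [].
- rewrite (divn_eq x B) (divn_eq y B).
  have H0 := H 0%N (ltn0Sn a). rewrite /dig expn0 !divn1 in H0. rewrite H0.
  congr (_ * _ + _)%N. apply: IH.
  + by rewrite ltn_divLR // -expnSr.
  + by rewrite ltn_divLR // -expnSr.
  + move=> t Ht. have := H t.+1 Ht. by rewrite /dig expnS !divnMA.
Qed.

Lemma dig_diff B a x y : (0 < B)%N -> (x < B ^ a)%N -> (y < B ^ a)%N -> x != y ->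
  exists t, (t < a)%N /\ dig B x t != dig B y t.
Proof.
move=> HB Hx Hy Hne.
case: (boolP [exists t : 'I_a, dig B x t != dig B y t]) => [/existsP [t Ht]|Hn].
- by exists t; split => //; exact: ltn_ord.
- exfalso. move/negP: Hne; apply. apply/eqP. apply: (dig_inj B a HB x y Hx Hy) => t Ht.
  apply/eqP. move: Hn; rewrite negb_exists => /forallP /(_ (Ordinal Ht)). by rewrite negbK.
Qed.

Lemma feas_constr d k n a : (2 <= d)%N -> (d <= k)%N -> (a <= n)%N ->
  feasible2 (G_minus_clique d k) (G_empty k) n (d ^ a) (k ^ (n - a)).
Proof.
move=> hd hdk han.
have hd0 : (0 < d)%N by apply: leq_trans hd.
have hk0 : (0 < k)%N by apply: leq_trans hdk.
split; first by rewrite expn_gt0 hd0.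
split; first by rewrite expn_gt0 hk0.
pose E := fun (a1 : 'I_(d ^ a)) (a2 : 'I_(k ^ (n - a))) (t : 'I_n) =>
  if (nat_of_ord t < a)%N then Ordinal (leq_trans (dig_lt _ (nat_of_ord a1) (nat_of_ord t) hd0) hdk)
  else Ordinal (dig_lt _ (nat_of_ord a2) (nat_of_ord t - a) hk0).
have HE1 : forall a1 a2 (t : 'I_n), (nat_of_ord t < a)%N ->
    nat_of_ord (E a1 a2 t) = dig d (nat_of_ord a1) (nat_of_ord t).
  by move=> a1 a2 t Ht; rewrite /E Ht.
have HE2 : forall a1 a2 (t : 'I_n), ~~ (nat_of_ord t < a)%N ->
    nat_of_ord (E a1 a2 t) = dig k (nat_of_ord a2) (nat_of_ord t - a).
  by move=> a1 a2 t Ht; rewrite /E (negbTE Ht).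
exists E. clearbody E.
split.
- move=> a1 a1' a2 a2' Hne.
  have Hne' : nat_of_ord a1 != nat_of_ord a1' by apply/eqP => Q; apply: Hne; apply: val_inj.
  have [t [Ht Hdf]] := dig_diff _ _ _ _ hd0 (ltn_ord a1) (ltn_ord a1') Hne'.
  set t0 := Ordinal (leq_trans Ht han).
  have Ht0 : (nat_of_ord t0 < a)%N by exact Ht.
  exists t0. split.
  + move=> Q. move: (congr1 (@nat_of_ord k) Q) => /eqP.
    by rewrite (HE1 _ _ _ Ht0) (HE1 _ _ _ Ht0) (negbTE Hdf).
  + have L : forall x, (d <= dig d x t)%N = false by move=> x; rewrite leqNgt dig_lt.
    by rewrite /G_minus_clique (HE1 _ _ _ Ht0) (HE1 _ _ _ Ht0) !L andbF.
- move=> a1 a1' a2 a2' Hne.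
  have Hne' : nat_of_ord a2 != nat_of_ord a2' by apply/eqP => Q; apply: Hne; apply: val_inj.
  have [t [Ht Hdf]] := dig_diff _ _ _ _ hk0 (ltn_ord a2) (ltn_ord a2') Hne'.
  have Hat : (a + t < n)%N by rewrite -ltn_subRL.
  set t0 := Ordinal Hat.
  have Ht0 : ~~ (nat_of_ord t0 < a)%N by rewrite ltnNge negbK leq_addr.
  have Ht1 : (nat_of_ord t0 - a = t)%N by rewrite addKn.
  exists t0. split => //.
  move=> Q. move: (congr1 (@nat_of_ord k) Q) => /eqP.
  by rewrite (HE2 _ _ _ Ht0) (HE2 _ _ _ Ht0) Ht1 (negbTE Hdf).
Qed.

Theorem theorem7 (d k : nat) (hd : (2 <= d)%N) (hdk : (d <= k)%N)
  (alpha : R) (ha0 : Rle 0 alpha) (ha1 : Rle alpha 1) :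
  rate_optimal2 (G_minus_clique d k) (G_empty k)
    (Rmult alpha (log2 (INR d))) (Rmult (Rminus 1 alpha) (log2 (INR k))).
Proof.
have Dg1 : 1 < INR d by (have := INR_leq _ _ hd; cbn [INR]; lra).
have Kg : INR d <= INR k by exact: INR_leq.
have L2 : 0 < ln 2 by (have := ln_lt_2; lra).
have LD : 0 < ln (INR d) by (rewrite <- ln_1; apply ln_increasing; lra).
have LK : 0 < ln (INR k) by (have := ln_le_mono (INR d) (INR k) ltac:(lra) Kg; lra).
have LDr : 0 < log2 (INR d) by (unfold log2; apply Rdiv_lt_0_compat; lra).
have LKr : 0 < log2 (INR k) by (unfold log2; apply Rdiv_lt_0_compat; lra).
pose z := fun n => Int_part (alpha * INR n).
have Hz : forall n, (0 <= z n)%Z /\ IZR (z n) <= alpha * INR n /\ alpha * INR n - 1 < IZR (z n).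
  move=> n. have [A B] := base_Int_part (alpha * INR n).
  have Hn := pos_INR n.
  have C : IZR (-1) < IZR (z n) by (rewrite /z; have := Rmult_le_pos _ _ ha0 Hn; lra).
  apply lt_IZR in C. split; [lia| rewrite /z; lra].
pose a := fun n => Z.to_nat (z n).
have Ha : forall n, INR (a n) = IZR (z n).
  move=> n. by rewrite /a INR_IZR_INZ Z2Nat.id; [| case: (Hz n)].
have Han : forall n, (a n <= n)%N.
  move=> n. apply/leP. apply INR_le. rewrite Ha. have [_ [A _]] := Hz n.
  have := pos_INR n. nra.
have Hfeas : forall n, feasible2 (G_minus_clique d k) (G_empty k) n (d ^ a n) (k ^ (n - a n)).
  move=> n. exact: feas_constr.
pose r := fun n => INR (a n) / INR n.
have Hr : Un_cv r alpha.
  move=> eps He. have [N HN] := INR_archimed eps 1 He.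
  exists N => n Hn.
  have HnN : INR N <= INR n by apply le_INR; lia.
  have Hnp : 0 < INR n by nra.
  have [_ [A B]] := Hz n. rewrite -Ha in A B.
  unfold Rdist. apply Rabs_def1.
  + rewrite /r. apply (Rmult_lt_reg_r (INR n)); [lra|].
    replace ((INR (a n) / INR n - alpha) * INR n) with (INR (a n) - alpha * INR n) by (field; lra).
    nra.
  + rewrite /r. apply (Rmult_lt_reg_r (INR n)); [lra|].
    replace ((INR (a n) / INR n - alpha) * INR n) with (INR (a n) - alpha * INR n) by (field; lra).
    nra.
have Hfeas_rate : rate_feasible2 (G_minus_clique d k) (G_empty k)
    (alpha * log2 (INR d)) ((1 - alpha) * log2 (INR k)).
  exists (fun n => d ^ a n)%N, (fun n => k ^ (n - a n))%N. split; [exact Hfeas|split].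
  + apply (cv_ext1 _ (fun n => r n * log2 (INR d))); last by apply CV_mult; [exact Hr| apply cv_const].
    move=> n Hn. rewrite -natpowE pow_INR /log2 ln_pow; [|lra]. rewrite /r. unfold Rdiv. ring.
  + apply (cv_ext1 _ (fun n => (1 - r n) * log2 (INR k))); last first.
      apply CV_mult; [apply CV_minus; [apply cv_const| exact Hr]| apply cv_const].
    move=> n Hn. have Hnp : 0 < INR n by apply lt_0_INR; lia.
    rewrite -natpowE pow_INR /log2 ln_pow; [|lra].
    have -> : INR (n - a n)%N = INR n - INR (a n).
      have := INR_addn (n - a n) (a n). rewrite subnK; [lra| exact: Han].
    rewrite /r. field. lra.
split; [exact Hfeas_rate| split].
- move=> [R1' [Hgt HR]]. have := rate_bound d k hd hdk _ _ HR.
  have E : (1 - alpha) * log2 (INR k) / log2 (INR k) = 1 - alpha by (field; lra).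
  rewrite E => H.
  have : R1' / log2 (INR d) <= alpha by lra.
  move=> H2. apply (Rmult_le_compat_r (log2 (INR d))) in H2; [|lra].
  replace (R1' / log2 (INR d) * log2 (INR d)) with R1' in H2 by (field; lra). lra.
- move=> [R2' [Hgt HR]]. have := rate_bound d k hd hdk _ _ HR.
  have E : alpha * log2 (INR d) / log2 (INR d) = alpha by (field; lra).
  rewrite E => H.
  have : R2' / log2 (INR k) <= 1 - alpha by lra.
  move=> H2. apply (Rmult_le_compat_r (log2 (INR k))) in H2; [|lra].
  replace (R2' / log2 (INR k) * log2 (INR k)) with R2' in H2 by (field; lra). lra.
Qed.
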